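(* Let $\psi\in C^\infty(P)$ be strongly convex and for $s\in\mathbb R$ let $g_s=g_P+s\psi$ with Hessian $H_s$ on $\check P$. Then for each vertex $v$ of $P$ and each $s\in\mathbb R$ there is a positive-definite island of $g_s$ containing $v$; that is, there exists a connected open neighbourhood $U^v_s$ of $v$ in $P$ such that $H_s(x)$ is positive definite for all $x\in U^v_s\cap\check P$.
   Context: Let $P=\{x\in\mathbb R^n:\ell_j(x)=\langle\nu_j,x\rangle+\lambda_j\ge0,\ j=1,\dots,r\}$ be a Delzant polytope (with primitive inward normals $\nu_j$) with interior $\check P$, and $g_P=\frac12\sum_{j=1}^r\ell_j\log\ell_j$ on $\check P$. Strongly convex means the Hessian of $\psi$ is positive definite on $P$. Positive-definite islands are the connected open regions of $P$ on which $H_s$ is positive definite. *)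

(* Defs.v *)
From HB Require Import structures.
From mathcomp Require Import all_boot all_order all_algebra.
From mathcomp Require Import all_classical all_reals all_analysis.
Set Implicit Arguments. Unset Strict Implicit. Unset Printing Implicit Defensive.
Import Order.TTheory GRing.Theory Num.Theory.
Import numFieldNormedType.Exports.
Local Open Scope classical_set_scope.
Local Open Scope ring_scope.

Section Defs.
Variables (R : realType) (n r : nat).
Implicit Types (nu : 'I_r -> 'rV[int]_n) (lam : 'I_r -> R) (x v : 'rV[R]_n).

Definition ell nu lam (j : 'I_r) x : R :=
  \sum_(k < n) ((nu j 0 k)%:~R * x 0 k) + lam j.

Definition polytope nu lam : set 'rV[R]_n := [set x | forall j, 0 <= ell nu lam j x].
Definition polytope_int nu lam : set 'rV[R]_n := [set x | forall j, 0 < ell nu lam j x].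

Definition is_vertex nu lam v : Prop :=
  polytope nu lam v /\
  forall a b, polytope nu lam a -> polytope nu lam b ->
    v = 2^-1 *: (a + b) -> a = b.

Definition primitive (w : 'rV[int]_n) : Prop :=
  \big[gcdz/0%Z]_(k < n) w 0 k = 1%Z.

(* Delzant polytope: bounded, nonempty interior, primitive normals, each
   inequality defines a facet, and at every vertex exactly n facets meet, their
   normals forming a Z-basis of Z^n. *)
Definition delzant nu lam : Prop :=
  [/\ (exists M : R, forall x, polytope nu lam x -> forall k, `|x 0 k| <= M),
      (exists x, polytope_int nu lam x),
      (forall j, primitive (nu j)),
      (forall j, exists x, ell nu lam j x = 0 /\
                  forall k, k != j -> 0 < ell nu lam k x) &
      (forall v, is_vertex nu lam v ->
         exists f : 'I_n -> 'I_r, injective f /\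
           (forall j, ell nu lam j v = 0 <-> exists i, f i = j) /\
           (let B := \matrix_(i < n, k < n) nu (f i) 0 k in
            \det B = 1 \/ \det B = -1))].

Fixpoint dder (vs : seq 'rV[R]_n) (f : 'rV[R]_n -> R) : 'rV[R]_n -> R :=
  match vs with
  | [::] => f
  | w :: ws => fun x => 'D_w (dder ws f) x
  end.

Definition smooth_on (U : set 'rV[R]_n) (f : 'rV[R]_n -> R) : Prop :=
  forall vs x, U x -> differentiable (dder vs f) x.

Definition ebasis (i : 'I_n) : 'rV[R]_n := delta_mx 0 i.

Definition hessian (f : 'rV[R]_n -> R) x : 'M[R]_n :=
  \matrix_(i < n, j < n) dder [:: ebasis i; ebasis j] f x.

Definition posdef (M : 'M[R]_n) : Prop :=
  M^T = M /\ forall w : 'rV[R]_n, w != 0 -> 0 < (w *m M *m w^T) 0 0.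

Definition gP nu lam (x : 'rV[R]_n) : R :=
  2^-1 * \sum_(j < r) (ell nu lam j x * ln (ell nu lam j x)).

Definition gs nu lam (psi : 'rV[R]_n -> R) (s : R) (x : 'rV[R]_n) : R :=
  gP nu lam x + s * psi x.

End Defs.

(* Main.v *)
Require Import Defs.
From HB Require Import structures.
From mathcomp Require Import all_boot all_order all_algebra.
From mathcomp Require Import all_classical all_reals all_analysis.
From mathcomp Require Import lra ring.
Import Order.TTheory GRing.Theory Num.Theory.
Import numFieldNormedType.Exports.
Local Open Scope classical_set_scope.
Local Open Scope ring_scope.
Set Implicit Arguments. Unset Strict Implicit. Unset Printing Implicit Defensive.

Lemma derive_line (R : realType) (V : normedModType R) (f : V -> R) x v : 'D_v f x = 'D_1 (fun h : R => f (h *: v + x)) 0.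
Proof.
rewrite /derive.
have -> : (fun h : R => h^-1 *: ((f \o shift x) (h *: v) - f x)) =
  (fun h : R => h^-1 *: (((fun h0 : R => f (h0 *: v + x)) \o shift 0) (h *: 1) - f (0 *: v + x))).
  by rewrite funeqE => h /=; rewrite addr0 scale0r add0r [_%:A]mulr1.
by [].
Qed.

Section Aux.
Variables (R : realType) (n : nat).
Implicit Types (f : 'rV[R]_n -> R).

Lemma is_derive_affine_comp f (G : R -> R) y w c g' :
  (forall h, f (h *: w + y) = h * c + f y) ->
  is_derive (f y) 1 G g' -> is_derive y w (G \o f) (c * g').
Proof.
move=> Hf HG.
have dG : differentiable G (f y) by apply/derivable1_diffP; exact: ex_derive.
have E : (fun h : R => (G \o f) (h *: w + y)) = (fun h : R => G (h *: c + f y)).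
  by rewrite funeqE => h /=; rewrite Hf.
apply: DeriveDef.
  apply/derivable1P; rewrite E; apply/(derivable1P G (f y) c).
  exact: diff_derivable.
rewrite derive_line E -derive_line deriveE // diff1E //.
by rewrite derive1E derive_val.
Qed.

End Aux.

Section Ell.
Variables (R : realType) (n r : nat) (nu : 'I_r -> 'rV[int]_n) (lam : 'I_r -> R).

Definition cc (j : 'I_r) (w : 'rV[R]_n) : R := \sum_(k < n) (nu j 0 k)%:~R * w 0 k.

Lemma ell_affine j (h : R) (w y : 'rV[R]_n) :
  ell nu lam j (h *: w + y) = h * cc j w + ell nu lam j y.
Proof.
rewrite /ell /cc addrA; congr (_ + _).
rewrite mulr_sumr -big_split /=; apply: eq_bigr => k _.
by rewrite !mxE mulrDr mulrCA.
Qed.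

Lemma is_derive_ell j (y w : 'rV[R]_n) : is_derive y w (ell nu lam j) (cc j w).
Proof.
have := @is_derive_affine_comp R n (ell nu lam j) id y w (cc j w) 1
  (fun h => ell_affine j h w y) (is_derive_id _ _).
by rewrite mulr1.
Qed.

Lemma is_derive_lnell j (y w : 'rV[R]_n) : 0 < ell nu lam j y ->
  is_derive y w (fun x => ln (ell nu lam j x)) (cc j w / ell nu lam j y).
Proof.
move=> ly.
have H := (@is_derive_affine_comp R n (ell nu lam j) (@ln R) y w (cc j w) _
  (fun h => ell_affine j h w y) (is_derive1_ln ly)).
exact H.
Qed.

Lemma is_derive_ellln j (y w : 'rV[R]_n) : 0 < ell nu lam j y ->
  is_derive y w (fun x => ell nu lam j x * ln (ell nu lam j x))
     (cc j w * (ln (ell nu lam j y) + 1)).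
Proof.
move=> ly.
have H := is_deriveM (@is_derive_ell j y w) (@is_derive_lnell j y w ly).
apply: is_derive_eq H _.
rewrite /GRing.scale /= mulrCA mulfV ?gt_eqF //.
by rewrite mulrDr mulr1 addrC mulrC.
Qed.

Lemma is_derive_gP (y w : 'rV[R]_n) : polytope_int nu lam y ->
  is_derive y w (gP nu lam)
    (2^-1 * \sum_(j < r) cc j w * (ln (ell nu lam j y) + 1)).
Proof.
move=> Py.
have H := @is_derive_sum R _ _ r (fun j x => ell nu lam j x * ln (ell nu lam j x)) y w
   _ (fun j => @is_derive_ellln j y w (Py j)).
have H2 := is_deriveZ (2^-1) H.
have E : gP nu lam = 2^-1 \*: \sum_(j < r) (fun x => ell nu lam j x * ln (ell nu lam j x)).
  by rewrite funeqE => x; rewrite /gP /= fct_sumE.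
by rewrite E.
Qed.

Lemma is_derive_DgP (y w u : 'rV[R]_n) : polytope_int nu lam y ->
  is_derive y u (fun x => 2^-1 * \sum_(j < r) cc j w * (ln (ell nu lam j x) + 1))
    (2^-1 * \sum_(j < r) cc j w * (cc j u / ell nu lam j y)).
Proof.
move=> Py.
have H j := is_deriveZ (cc j w) (is_deriveD (@is_derive_lnell j y u (Py j))
   (is_derive_cst (1 : R) y u)).
have H1 := @is_derive_sum R _ _ r _ y u _ H.
have H2 := is_deriveZ (2^-1) H1.
have E : (fun x => 2^-1 * \sum_(j < r) cc j w * (ln (ell nu lam j x) + 1)) =
   2^-1 \*: \sum_(j < r) (cc j w \*: ((fun x => ln (ell nu lam j x)) + cst 1)).
  by rewrite funeqE => x; rewrite /= fct_sumE.
rewrite E; apply: is_derive_eq H2 _.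
by rewrite /GRing.scale /=; congr (_ * _); apply: eq_bigr => j _; rewrite addr0.
Qed.

End Ell.

Section Hess.
Variables (R : realType) (n r : nat) (nu : 'I_r -> 'rV[int]_n) (lam : 'I_r -> R).

Lemma differentiable_ell j (y : 'rV[R]_n) : differentiable (ell nu lam j) y.
Proof.
have -> : ell nu lam j = \sum_(k < n) ((cst (nu j 0 k)%:~R) * (fun z : 'rV[R]_n => z 0 k))
   + cst (lam j).
  by rewrite funeqE => z; rewrite /ell /= fct_sumE.
apply: differentiableD; last exact: differentiable_cst.
apply: differentiable_sum => k.
apply: differentiableM; first exact: differentiable_cst.
exact: differentiable_coord.
Qed.

Lemma near_int (y : 'rV[R]_n) : polytope_int nu lam y ->
  \forall z \near y, polytope_int nu lam z.
Proof.
move=> Py.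
suff : \forall z \near y, forall j, 0 < ell nu lam j z by [].
apply: (@filter_forall _ _ (fun j z => 0 < ell nu lam j z) (nbhs y) _) => j.
have c := differentiable_continuous (differentiable_ell j y).
have := cvgr_gt _ c _ (Py j).
by apply; exact: nbhs_filter.
Qed.

Lemma hessian_gs (psi : 'rV[R]_n -> R) (s : R) (O : set 'rV[R]_n) (x : 'rV[R]_n) :
  open O -> smooth_on O psi -> O x -> polytope_int nu lam x -> forall i j,
  hessian (gs nu lam psi s) x i j =
    2^-1 * (\sum_(k < r) cc nu k (@ebasis R n j) * (cc nu k (@ebasis R n i) / ell nu lam k x))
    + s * hessian psi x i j.
Proof.
move=> oO sm Ox Px i j.
rewrite /hessian !mxE /=.
have nO : \forall y \near x, O y by apply: open_nbhs_nbhs.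
have nP := near_int Px.
rewrite (@near_eq_derive _ _ _ _
   (fun y => 2^-1 * (\sum_(k < r) cc nu k (@ebasis R n j) * (ln (ell nu lam k y) + 1))
      + s * 'D_(@ebasis R n j) psi y)).
  have d2 : derivable (fun y => 'D_(@ebasis R n j) psi y) x (@ebasis R n i).
    by apply: diff_derivable; exact: (sm [:: @ebasis R n j] x Ox).
  have H := is_deriveD (@is_derive_DgP R n r nu lam x (@ebasis R n j) (@ebasis R n i) Px)
     (is_deriveZ s (derivableP d2)).
  have E : (fun y => 2^-1 * (\sum_(k < r) cc nu k (@ebasis R n j) * (ln (ell nu lam k y) + 1))
      + s * 'D_(@ebasis R n j) psi y) =
     (fun y => 2^-1 * (\sum_(k < r) cc nu k (@ebasis R n j) * (ln (ell nu lam k y) + 1)))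
      + s \*: (fun y => 'D_(@ebasis R n j) psi y) by [].
  by rewrite E derive_val.
near=> y.
have Py : polytope_int nu lam y by near: y.
have Oy : O y by near: y.
have d1 : derivable psi y (@ebasis R n j).
  by apply: diff_derivable; exact: (sm [::] y Oy).
have H := is_deriveD (@is_derive_gP R n r nu lam y (@ebasis R n j) Py) (is_deriveZ s (derivableP d1)).
have E : gs nu lam psi s = gP nu lam + s \*: psi by [].
by rewrite E derive_val.
Unshelve. all: by end_near.
Qed.

End Hess.

Section Alg.
Variable (R : realType).

Lemma qformE n (M : 'M[R]_n) (w : 'rV[R]_n) :
  (w *m M *m w^T) 0 0 = \sum_i \sum_j w 0 i * M i j * w 0 j.
Proof.
rewrite !mxE; under eq_bigr do rewrite !mxE.
rewrite exchange_big /=; apply: eq_bigr => i _.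
rewrite mulr_suml; apply: eq_bigr => j _.
by [].
Qed.

Lemma sum_term m (F : 'I_m -> R) i : (forall k, 0 <= F k) -> F i <= \sum_k F k.
Proof.
move=> F0; rewrite (bigD1 i) //= lerDl; apply: sumr_ge0 => k _; exact: F0.
Qed.

Lemma sq_sum_le m (a : 'I_m -> R) : (\sum_i a i) ^+ 2 <= m%:R * \sum_i a i ^+ 2.
Proof.
rewrite expr2 mulr_suml; under eq_bigr do rewrite mulr_sumr.
apply: (@le_trans _ _ (\sum_i \sum_j (2^-1 * (a i ^+ 2 + a j ^+ 2)))).
  apply: ler_sum => i _; apply: ler_sum => j _.
  have := sqr_ge0 (a i - a j); rewrite sqrrB => h.
  rewrite mulrDr; lra.
under eq_bigr do rewrite -mulr_sumr big_split /=.
have hc (c : R) : \sum_(i0 < m) c = m%:R * c.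
  by rewrite sumr_const card_ord mulr_natl.
under eq_bigr do rewrite hc.
rewrite -mulr_sumr big_split /= -mulr_sumr hc; lra.
Qed.

Lemma sum_inj_le m k (F : 'I_k -> R) (g : 'I_m -> 'I_k) :
  injective g -> (forall j, 0 <= F j) -> \sum_i F (g i) <= \sum_j F j.
Proof.
move=> inj F0.
have -> : \sum_i F (g i) = \sum_(j in g @: [set: 'I_m]) F j.
  rewrite big_imset /=; last by move=> a b _ _; apply: inj.
  by apply: eq_bigl => i; rewrite in_setT.
rewrite [X in _ <= X](bigID (fun j => j \in g @: [set: 'I_m])) /= lerDl.
by apply: sumr_ge0 => j _.
Qed.

Lemma cc_ebasis n r (nu : 'I_r -> 'rV[int]_n) k i :
  cc nu k (@ebasis R n i) = (nu k 0 i)%:~R.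
Proof.
rewrite /cc (bigD1 i) //= big1 ?addr0.
  by rewrite /ebasis mxE !eqxx mulr1.
by move=> l li; rewrite /ebasis mxE eqxx /= (negbTE li) mulr0.
Qed.

End Alg.

Section Conn.
Variable (R : realType) (V : normedModType R).

Lemma conv_connected (U : set V) (v : V) : U v ->
  (forall x t, U x -> 0 <= t <= 1 -> U (t *: (x - v) + v)) -> connected U.
Proof.
move=> Uv HU.
have -> : U = \bigcup_(x in U) [set t *: (x - v) + v | t in `[0, 1]].
  apply/seteqP; split => y.
    move=> Uy; exists y => //; exists 1.
      by rewrite /= in_itv /= ler01 lexx.
    by rewrite scale1r subrK.
  move=> [x Ux [t t01 <-]]; apply: HU => //.
apply: bigcup_connected.
  exists v => x Ux; exists 0; first by rewrite /= in_itv /= ler01 lexx.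
  by rewrite scale0r add0r.
move=> x Ux; apply: connected_continuous_connected.
  by apply/connected_intervalP; exact: interval_is_interval.
apply: continuous_subspaceT => t.
apply: differentiable_continuous.
have -> : (fun t : R => t *: (x - v) + v) = (fun t : R => t *: (x - v)) + cst v by [].
apply: differentiableD; last exact: differentiable_cst.
exact: differentiableZl.
Qed.

End Conn.

Section Quad.
Variable (R : realType).

Lemma quad_expand n r (w : 'rV[R]_n) (a : 'I_r -> 'I_n -> R) (l : 'I_r -> R) :
  \sum_i \sum_j w 0 i * (2^-1 * \sum_k a k j * (a k i / l k)) * w 0 j =
  2^-1 * \sum_k (\sum_i a k i * w 0 i) ^+ 2 / l k.
Proof.
transitivity (\sum_k \sum_i \sum_j (2^-1 * (a k i * w 0 i) * (a k j * w 0 j) / l k)).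
  rewrite [RHS]exchange_big /=; apply: eq_bigr => i _.
  rewrite [RHS]exchange_big /=; apply: eq_bigr => j _.
  rewrite mulr_sumr mulr_sumr mulr_suml; apply: eq_bigr => k _.
  by rewrite /=; ring.
rewrite mulr_sumr; apply: eq_bigr => k _.
rewrite expr2 mulr_suml mulr_suml mulr_sumr.
apply: eq_bigr => i _.
rewrite mulr_sumr mulr_suml mulr_sumr.
apply: eq_bigr => j _.
by ring.
Qed.

Lemma tr_entry n (A : 'M[R]_n) i j : A^T i j = A j i.
Proof. by rewrite mxE. Qed.

End Quad.

Lemma sum_sq_expand (R : realDomainType) m (a : 'I_m -> R) c :
  \sum_i \sum_j a i * c * a j = c * (\sum_i a i) ^+ 2.
Proof.
rewrite expr2 big_distrl mulr_sumr /=; apply: eq_bigr => i _.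
rewrite big_distrr mulr_sumr /=; apply: eq_bigr => j _; ring.
Qed.
Lemma sym_of_entries (R : realDomainType) n (A : 'M[R]_n) :
  (forall i j, A j i = A i j) -> A^T = A.
Proof. by move=> h; apply/matrixP => i j; rewrite mxE h. Qed.

Lemma eqle (R : realDomainType) (a b : R) : a = b -> a <= b.
Proof. by move=> ->. Qed.

Lemma hessianE (R : realType) n (f : 'rV[R]_n -> R) x i j :
  hessian f x i j = dder [:: ebasis R i; ebasis R j] f x.
Proof. by rewrite /hessian mxE. Qed.


Unset Implicit Arguments. Set Strict Implicit. Set Printing Implicit Defensive.

Theorem mainTheorem9 (R : realType) (n r : nat)
    (nu : 'I_r -> 'rV[int]_n) (lam : 'I_r -> R) (psi : 'rV[R]_n -> R) :
  delzant nu lam ->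
  (exists O : set 'rV[R]_n, open O /\ polytope nu lam `<=` O /\ smooth_on O psi) ->
  (forall x, polytope nu lam x -> posdef (hessian psi x)) ->
  forall (v : 'rV[R]_n) (s : R), is_vertex nu lam v ->
    exists U : set 'rV[R]_n,
      [/\ (exists O : set 'rV[R]_n, open O /\ U = O `&` polytope nu lam),
          U `<=` polytope nu lam,
          connected U,
          U v &
          forall x, U x -> polytope_int nu lam x -> posdef (hessian (gs nu lam psi s) x)].
Proof.
move=> [_ _ _ _ Hvert] [Op [oO [PO sm]]] Hpd v s vv.
have Pv : polytope nu lam v by case: vv.
have [f [finj [Hf Hdet]]] := Hvert v vv.
pose BR : 'M[R]_n := map_mx (intr : int -> R) (\matrix_(i < n, k < n) nu (f i) 0 k).
have uBR : BR \in unitmx.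
  rewrite unitmxE det_map_mx.
  by case: Hdet => ->; rewrite ?rmorphN rmorph1 ?unitrN unitr1.
pose C := invmx BR.
have CB : C *m BR = 1%:M by apply: mulVmx.
have BRE i k : BR i k = (nu (f i) 0 k)%:~R by rewrite !mxE.
pose K := \sum_k \sum_i `|C k i|.
pose H0 := hessian psi v.
pose M := \sum_i \sum_j (`|H0 i j| + 1).
pose L := n%:R * (K ^+ 2 * n%:R).
pose A := `|s| * (M * n%:R) * L.
have K0 : 0 <= K by apply: sumr_ge0 => k _; apply: sumr_ge0.
have M0 : 0 <= M by apply: sumr_ge0 => i _; apply: sumr_ge0 => j _; rewrite addr_ge0.
have L0 : 0 <= L by rewrite /L mulr_ge0 // mulr_ge0 // sqr_ge0.
have A0 : 0 <= A by rewrite /A !mulr_ge0.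
pose d := (2 * (A + 1))^-1.
have d0 : 0 < d by rewrite /d invr_gt0 mulr_gt0 // ltr_wpDl.
have nH : \forall y \near v, forall p : 'I_n * 'I_n,
    `|dder [:: ebasis R p.1; ebasis R p.2] psi y| < `|H0 p.1 p.2| + 1.
  apply: (@filter_forall _ _ (fun p y => `|dder [:: ebasis R p.1; ebasis R p.2] psi y| < `|H0 p.1 p.2| + 1)
     (nbhs v) _) => -[i j] /=.
  have dH : differentiable (dder [:: ebasis R i; ebasis R j] psi) v.
    exact: (sm _ v (PO v Pv)).
  have c := differentiable_continuous dH.
  have hv : `|dder [:: ebasis R i; ebasis R j] psi v| < `|H0 i j| + 1.
    by rewrite /H0 hessianE ltrDl.
  have h := cvgr_norm_lt _ c _ hv.
  by apply: h; exact: nbhs_filter.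
have nE : \forall y \near v, forall i : 'I_n, ell nu lam (f i) y < d.
  apply: (@filter_forall _ _ (fun i y => ell nu lam (f i) y < d) (nbhs v) _) => i /=.
  have c := differentiable_continuous (@differentiable_ell R n r nu lam (f i) v).
  have e0' : ell nu lam (f i) v < d by rewrite (proj2 (Hf (f i))) //; exists i.
  have h := cvgr_lt _ c _ e0'.
  by apply: h; exact: nbhs_filter.
have nHE : \forall y \near v, (forall p : 'I_n * 'I_n,
    `|dder [:: ebasis R p.1; ebasis R p.2] psi y| < `|H0 p.1 p.2| + 1) /\
    (forall i : 'I_n, ell nu lam (f i) y < d).
  by near=> y; split; near: y.
move/nbhs_ballP: nHE => [e e0 He].
exists (ball v e `&` polytope nu lam); split.
- by exists (ball v e); split => //; exact: ball_open.
- by move=> y [].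
- apply: (@conv_connected R _ _ v); first by split => //; exact: ballxx.
  move=> y t [By Py] /andP[t0 t1]; split.
    move: By; rewrite -ball_normE /ball_ /= => By.
    have -> : v - (t *: (y - v) + v) = t *: (v - y).
      by rewrite opprD addrCA subrr addr0 -scalerN opprB.
    rewrite normrZ ger0_norm //; apply: le_lt_trans By.
    by rewrite ler_piMl.
  move=> j; rewrite (@ell_affine R n r nu lam).
  have hc : cc nu j (y - v) = ell nu lam j y - ell nu lam j v.
    have := @ell_affine R n r nu lam j 1 (y - v) v.
    by rewrite scale1r mul1r subrK => ->; rewrite addrK.
  rewrite hc; have := Py j; have := Pv j; nra.
- by split => //; exact: ballxx.
move=> x [bx Px] Pix.
have [hH hE] := He x bx.
have Ox : Op x := PO x Px.
have HG i j := @hessian_gs R n r nu lam psi s Op x oO sm Ox Pix i j.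
have [Hsym _] := Hpd x Px.
have HpE i j : hessian psi x i j = dder [:: ebasis R i; ebasis R j] psi x.
  exact: hessianE.
move: (hessian psi x) Hsym HG HpE => Hp Hsym HG HpE.
move: (hessian (gs nu lam psi s) x) HG => Hg HG.
split.
  apply: sym_of_entries => i j; rewrite !HG.
  have Hji : Hp j i = Hp i j.
    by move/matrixP: Hsym => /(_ i j); rewrite tr_entry.
  rewrite Hji; congr (_ * _ + _).
  by apply: eq_bigr => k _; rewrite mulrCA.
move=> w w0.
rewrite qformE.
pose Qp := \sum_i \sum_j w 0 i * Hp i j * w 0 j.
have E : \sum_i \sum_j w 0 i * Hg i j * w 0 j =
   \sum_i \sum_j w 0 i * (2^-1 * \sum_k cc nu k (ebasis R j) *
      (cc nu k (ebasis R i) / ell nu lam k x)) * w 0 j + s * Qp.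
  rewrite /Qp mulr_sumr -big_split; apply: eq_bigr => i _.
  rewrite mulr_sumr -big_split; apply: eq_bigr => j _ /=.
  rewrite HG; ring.
rewrite E (quad_expand w (fun k i => cc nu k (ebasis R i)) (fun k => ell nu lam k x)).
have ccE k : \sum_i cc nu k (ebasis R i) * w 0 i = cc nu k w.
  by under eq_bigr do rewrite cc_ebasis.
under eq_bigr do rewrite ccE.
pose S := \sum_k (cc nu k w) ^+ 2 / ell nu lam k x.
pose Z := \sum_i (cc nu (f i) w) ^+ 2.
pose q := \sum_k w 0 k ^+ 2.
have Z0 : 0 <= Z by apply: sumr_ge0 => i _; exact: sqr_ge0.
have F1 : 2 * (A + 1) * Z <= S.
  apply: (@le_trans _ _ (\sum_i (cc nu (f i) w) ^+ 2 / ell nu lam (f i) x)); last first.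
    apply: (@sum_inj_le R n r (fun k => (cc nu k w) ^+ 2 / ell nu lam k x) f finj) => k.
    by rewrite divr_ge0 ?sqr_ge0 // ltW.
  rewrite /Z mulr_sumr; apply: ler_sum => i _.
  rewrite mulrC ler_wpM2l ?sqr_ge0 //.
  have dA : 2 * (A + 1) = d^-1 by rewrite /d invrK.
  rewrite dA; apply: ltW; rewrite ltf_pV2 ?posrE //; exact: Pix.
have F2 : `|Qp| <= M * n%:R * q.
  have HM i j : `|Hp i j| <= M.
    rewrite HpE; apply: (le_trans (ltW (hH (i, j)))) => /=.
    apply: (@le_trans _ _ (\sum_j0 (`|H0 i j0| + 1))).
      by apply: (@sum_term R _ (fun j0 => `|H0 i j0| + 1) j) => k; rewrite addr_ge0.
    apply: (@sum_term R _ (fun i0 => \sum_j0 (`|H0 i0 j0| + 1)) i) => k.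
    by apply: sumr_ge0 => l _; rewrite addr_ge0.
  apply: (le_trans (ler_norm_sum _ _ _)).
  apply: (@le_trans _ _ (\sum_i \sum_j `|w 0 i| * M * `|w 0 j|)).
    apply: ler_sum => i _; apply: (le_trans (ler_norm_sum _ _ _)); apply: ler_sum => j _.
    rewrite !normrM; apply: ler_wpM2r => //; apply: ler_wpM2l => //.
  rewrite (@sum_sq_expand R n (fun i => `|w 0 i|) M).
  rewrite -mulrA; apply: ler_wpM2l => //.
  apply: (le_trans (sq_sum_le _)); apply: ler_wpM2l => //.
  by apply: eqle; apply: eq_bigr => i _; rewrite real_normK ?num_real.
have F3 : q <= L * Z.
  pose z := w *m BR^T.
  have zE i : z 0 i = cc nu (f i) w.
    rewrite /z /cc !mxE; apply: eq_bigr => k _; rewrite !mxE mulrC.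
    by rewrite -BRE.
  have wE : w = z *m C^T by rewrite /z -mulmxA -trmx_mul CB trmx1 mulmx1.
  have wk k : w 0 k = \sum_i z 0 i * C k i.
    by rewrite {1}wE [LHS]mxE; apply: eq_bigr => i _; rewrite tr_entry.
  have CK k i : `|C k i| <= K.
    apply: (@le_trans _ _ (\sum_i0 `|C k i0|)).
      by apply: (@sum_term R _ (fun i0 => `|C k i0|) i) => l.
    by apply: (@sum_term R _ (fun k0 => \sum_i0 `|C k0 i0|) k) => l; apply: sumr_ge0.
  pose T := \sum_i `|z 0 i|.
  have T0 : 0 <= T by apply: sumr_ge0.
  have wkb k : `|w 0 k| <= K * T.
    rewrite wk; apply: (le_trans (ler_norm_sum _ _ _)).
    rewrite /T mulr_sumr; apply: ler_sum => i _.
    by rewrite normrM mulrC; apply: ler_wpM2r.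
  have TZ : T ^+ 2 <= n%:R * Z.
    apply: (le_trans (sq_sum_le _)); apply: ler_wpM2l => //.
    by apply: eqle; apply: eq_bigr => i _; rewrite real_normK ?num_real // zE.
  have sq k : w 0 k ^+ 2 <= K ^+ 2 * (n%:R * Z).
    rewrite -real_normK ?num_real //.
    have a0 := normr_ge0 (w 0 k).
    have := wkb k; move: (`|w 0 k|) a0 => a a0 ak.
    apply: (@le_trans _ _ ((K * T) ^+ 2)).
      by rewrite -subr_ge0 subr_sqr mulr_ge0 // ?subr_ge0 // addr_ge0 // mulr_ge0.
    by rewrite exprMn; apply: ler_wpM2l => //; exact: sqr_ge0.
  apply: (@le_trans _ _ (\sum_(k < n) K ^+ 2 * (n%:R * Z))).
    by apply: ler_sum => k _; exact: sq.
  by rewrite sumr_const card_ord -mulr_natl /L; apply: eqle; ring.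
have F4 : 0 < q.
  case: (pickP (fun k => w 0 k != 0)) => [k wk0|Hw]; last first.
    move: w0; have -> : w = 0; last by rewrite eqxx.
    apply/matrixP => i k; rewrite (ord1 i) mxE.
    by move: (Hw k) => /negbFE/eqP.
  apply: (@lt_le_trans _ _ (w 0 k ^+ 2)).
    by rewrite lt0r sqrf_eq0 wk0 sqr_ge0.
  by apply: (@sum_term R _ (fun k => w 0 k ^+ 2) k) => j; exact: sqr_ge0.
have ZP : 0 < Z.
  rewrite lt0r Z0 andbT; apply/eqP => Z00.
  by move: F3; rewrite Z00 mulr0 leNgt F4.
have h1 : `|s| * `|Qp| <= A * Z.
  apply: (@le_trans _ _ (`|s| * (M * n%:R * (L * Z)))).
    apply: ler_wpM2l => //; apply: (le_trans F2); apply: ler_wpM2l => //.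
    exact: mulr_ge0.
  by rewrite /A; apply: eqle; ring.
have h2 : - (`|s| * `|Qp|) <= s * Qp.
  by have := ler_norm (- (s * Qp)); rewrite normrN normrM; lra.
have F1' : 2 * (A * Z) + 2 * Z <= S.
  by rewrite (_ : 2 * (A * Z) + 2 * Z = 2 * (A + 1) * Z) //; ring.
rewrite -/S; move: F1' h1 h2 ZP.
move: (A * Z) (s * Qp) (`|s| * `|Qp|) => a b c; lra.
Unshelve. all: by end_near.
Qed.
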